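(* Consider the downtown bathtub model described in the context, with a fixed number $N_s>0$ of suburban commuters, and let $C_s^{b*}$ be the equilibrium bathtub cost of a short-run equilibrium. Put $\theta \equiv \frac{C_s^{b*} v_f}{\alpha L}$. Then (i) $\theta$ satisfies $$F(\theta)\equiv N_s-\alpha n_j\left(\frac{1}{\beta}+\frac{1}{\gamma}\right)\left(\ln\theta+\frac{1}{\theta}-1\right)=0;$$ (ii) hypercongestion exists at the equilibrium if $\theta>2$.
   Context: Downtown traffic (bathtub model): the vehicle accumulation $n(t)\ge 0$ in the downtown area at time $t$ evolves as $\dot n(t)=I(t)-G(t)$, where $I(t)$ is the inflow and $G(t)=n(t)v(t)/L$ is the outflow, $L>0$ is the (common) trip length in the downtown area, and the space-mean speed follows the Greenshields law $v(t)=v_f\left(1-\frac{n(t)}{n_j}\right)$ with free-flow speed $v_f>0$ and jam accumulation $n_j>0$. The downtown travel time of a commuter arriving at work at time $t$ is $T(t)=L/v(t)$. A suburban commuter who arrives at work at time $t$ incurs the bathtub cost $C_s^b(t)=\alpha T(t)+s(t)$, where $s(t)=\beta(t^*-t)$ if $t\le t^*$ and $s(t)=\gamma(t-t^* )$ if $t>t^*$; here $\alpha,\beta,\gamma>0$ are the marginal costs of travel time, earliness and lateness, and $t^*$ is the desired arrival time. A short-run equilibrium (with $N_s$ fixed) is an accumulation path $n(\cdot)$ together with a number $C_s^{b*}$ such that $C_s^b(t)=C_s^{b*}$ for all $t$ with $n(t)>0$, $C_s^b(t)\ge C_s^{b*}$ for all $t$ with $n(t)=0$, and $\int_{\mathbb{R}}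 \frac{n(t)v(t)}{L}\,dt=N_s$. Hypercongestion means that the accumulation exceeds the critical accumulation $n_j/2$ (the accumulation maximizing the outflow $n v/L$) at some time. *)

(* Defs.v *)
From HB Require Import structures.
From mathcomp Require Import all_boot all_order all_algebra.
From mathcomp Require Import all_classical all_reals all_analysis.
Set Implicit Arguments. Unset Strict Implicit. Unset Printing Implicit Defensive.
Import Order.TTheory GRing.Theory Num.Theory.
Local Open Scope classical_set_scope.
Local Open Scope ring_scope.

Definition speed {R : realType} (vf nj x : R) : R := vf * (1 - x / nj).

Definition sched {R : realType} (beta gamma tstar t : R) : R :=
  if t <= tstar then beta * (tstar - t) else gamma * (t - tstar).

Definition travel_time {R : realType} (L vf nj : R) (n : R -> R) (t : R) : R :=
  L / speed vf nj (n t).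

Definition bathtub_cost {R : realType} (alpha beta gamma tstar L vf nj : R)
  (n : R -> R) (t : R) : R :=
  alpha * travel_time L vf nj n t + sched beta gamma tstar t.

Definition outflow {R : realType} (L vf nj : R) (n : R -> R) (t : R) : R :=
  n t * speed vf nj (n t) / L.

Definition short_run_equilibrium {R : realType}
  (alpha beta gamma tstar L vf nj Ns : R) (n : R -> R) (Cstar : R) : Prop :=
  [/\ (forall t, 0 <= n t),
      (forall t, 0 < n t -> bathtub_cost alpha beta gamma tstar L vf nj n t = Cstar),
      (forall t, n t = 0 -> Cstar <= bathtub_cost alpha beta gamma tstar L vf nj n t)
    & (\int[@lebesgue_measure R]_(t in [set: R]) (outflow L vf nj n t)%:E
         = Ns%:E)%E].

(* hypercongestion: accumulation exceeds critical accumulation n_j/2 at some time *)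
Definition hypercongestion {R : realType} (nj : R) (n : R -> R) : Prop :=
  exists t, nj / 2 < n t.

Definition Fbath {R : realType} (alpha beta gamma nj Ns theta : R) : R :=
  Ns - alpha * nj * (1 / beta + 1 / gamma) * (ln theta + 1 / theta - 1).

(* Main.v *)
Require Import Defs.
From HB Require Import structures.
From mathcomp Require Import all_boot all_order all_algebra.
From mathcomp Require Import all_classical all_reals all_analysis.
From mathcomp Require Import ring lra.
From mathcomp Require Import measurable_realfun.
Import Order.TTheory GRing.Theory Num.Theory.
Import numFieldNormedType.Exports.
Local Open Scope ring_scope.
Local Open Scope classical_set_scope.
Section S.
Context {R : realType}.

Lemma is_derive_aff (p q x : R) : is_derive x 1 (fun t => p + q * t) q.
Proof.
have H := is_deriveD (is_derive_cst p x 1) (is_deriveZ q (is_derive_id x (1:R))).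
have -> : (fun t => p + q * t) = (cst p + q \*: id) by apply/funext => t.
by rewrite add0r /GRing.scale/= mulr1 in H.
Qed.

Definition Fp (p q K : R) t := (ln (p + q * t) + (p + q * t)^-1) * (K / q).
Definition fp (p q K : R) t := K * ((p + q * t - 1) / (p + q * t) ^+ 2).

Lemma is_derive_F (p q K x : R) : q != 0 -> 0 < p + q * x ->
  is_derive x 1 (Fp p q K) (fp p q K x).
Proof.
move=> q0 ux.
have H1 : is_derive x 1 ((@ln R) \o (fun t => p + q * t)) ((p + q * x)^-1 * q).
  apply: is_derive1_comp; [exact: is_derive1_ln| exact: is_derive_aff].
have H2 : is_derive x 1 (fun t => (p + q * t)^-1) (- (p + q * x) ^- 2 *: q).
  apply: is_deriveV; [by rewrite gt_eqF| exact: is_derive_aff].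
have H4 := is_deriveM (is_deriveD H1 H2) (is_derive_cst (K / q) x 1).
have -> : Fp p q K = (((@ln R) \o (fun t => p + q * t) +
           (fun t => (p + q * t)^-1)) * cst (K / q)) by apply/funext.
apply: is_derive_eq H4 _.
rewrite /fp /GRing.scale /= mulr0 add0r.
have u0 : p + q * x != 0 by rewrite gt_eqF.
field.
by rewrite q0 u0.
Qed.

Lemma derivable_f (p q K x : R) : 0 < p + q * x -> derivable (fp p q K) x 1.
Proof.
move=> ux.
have u0 : p + q * x != 0 by rewrite gt_eqF.
have H1 := is_derive_aff (p - 1) q x.
have H2 := is_deriveM (is_derive_aff p q x) (is_derive_aff p q x).
have H3 := is_deriveV _ H2.
have H4 := is_deriveM H1 (H3 (mulf_neq0 u0 u0)).
have H5 := is_deriveM (is_derive_cst K x 1) H4.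
have -> : fp p q K = cst K * ((fun t => (p - 1) + q * t) * (fun t => ((p + q * t) * (p + q * t))^-1)).
  by apply/funext => t; rewrite /fp /= expr2 addrAC.
by case: H5.
Qed.

Lemma ftc_piece (p q K a b : R) : a < b -> q != 0 ->
  (forall t, a <= t <= b -> 0 < p + q * t) ->
  (\int[@lebesgue_measure R]_(x in `[a, b]) (fp p q K x)%:E = (Fp p q K b - Fp p q K a)%:E)%E.
Proof.
move=> ab q0 upos.
rewrite EFinB; apply: continuous_FTC2 => //.
- apply: derivable_within_continuous => x; rewrite in_itv /= => xab.
  exact/derivable_f/upos.
- have dF : forall x, a <= x <= b -> derivable (Fp p q K) x 1.
    by move=> x xab; case: (@is_derive_F p q K x q0 (upos x xab)).
  have cF : forall x, a <= x <= b -> {for x, continuous (Fp p q K)}.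
    move=> x xab; apply/differentiable_continuous; rewrite -derivable1_diffP.
    exact: dF.
  split.
  + move=> x; rewrite in_itv /= => /andP[ax xb]; apply: dF.
    by rewrite !ltW.
  + apply: cvg_at_right_filter; apply: cF; by rewrite lexx ltW.
  + apply: cvg_at_left_filter; apply: cF; by rewrite lexx ltW.
- move=> x; rewrite in_itv /= => /andP[ax xb].
  rewrite derive1E; apply: derive_val; apply: is_derive_F => //.
  by apply: upos; rewrite !ltW.
Qed.
End S.
Theorem lemma1 (R : realType) (alpha beta gamma tstar L vf nj Ns Cstar : R)
  (n : R -> R) :
  0 < alpha -> 0 < beta -> 0 < gamma -> 0 < L -> 0 < vf -> 0 < nj -> 0 < Ns ->
  (forall t, n t < nj) ->
  short_run_equilibrium alpha beta gamma tstar L vf nj Ns n Cstar ->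
  let theta := Cstar * vf / (alpha * L) in
  Fbath alpha beta gamma nj Ns theta = 0 /\
  (2 < theta -> hypercongestion nj n).
Proof.
move=> a0 b0 g0 L0 vf0 nj0 Ns0 nlt [n0 Ceq Cge Hint] theta.
set k := vf / (alpha * L).
have k0 : 0 < k by rewrite divr_gt0 // mulr_gt0.
pose s t := sched beta gamma tstar t.
pose u t := theta - s t * k.
have s0 : forall t, 0 <= s t.
  move=> t; rewrite /s /sched; case: ifP => H.
    by apply: mulr_ge0; [exact: ltW| rewrite subr_ge0].
  by apply: mulr_ge0; [exact: ltW| rewrite subr_ge0 ltW // ltNge H].
have Hn : forall t, n t = if 1 < u t then nj * (1 - (u t)^-1) else 0.
  move=> t; have := n0 t; rewrite le_eqVlt => /predU1P[nt0|ntp].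
    have := Cge t (esym nt0).
    rewrite /bathtub_cost /travel_time /speed -nt0 mul0r subr0 mulr1 -/(s t) => Hc.
    have -> : (1 < u t) = false; last by [].
    apply/negbTE; rewrite -leNgt.
    have -> : u t = 1 + (Cstar - (alpha * (L / vf) + s t)) * k.
      rewrite /u /theta /k; field; by rewrite !gt_eqF // mulr_gt0.
    rewrite gerDl; apply: mulr_le0_ge0; [by rewrite subr_le0| exact: ltW].
  have := Ceq t ntp.
  rewrite /bathtub_cost /travel_time /speed -/(s t) => Hc.
  set w := 1 - n t / nj.
  have w0 : 0 < w by rewrite /w subr_gt0 ltr_pdivrMr // mul1r.
  have w1 : w < 1 by rewrite /w ltrBlDr ltrDl divr_gt0.
  have ut : u t = w^-1.
    rewrite /u /theta /k -Hc -/w; field.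
    by rewrite !gt_eqF // ?mulr_gt0.
  rewrite ut invf_gt1 // w1 invrK /w; field; by rewrite gt_eqF.
pose K := nj * vf / L.
pose g x := K * ((x - 1) / x ^+ 2).
pose h t := if 1 < u t then g (u t) else 0.
have Hout : forall t, outflow L vf nj n t = h t.
  move=> t; rewrite /outflow /speed /h Hn; case: ifP => H; last by rewrite !mul0r.
  rewrite /g /K; field.
  by rewrite !gt_eqF // (lt_trans ltr01 H).
have ule : forall t, u t <= theta.
  by move=> t; rewrite /u gerBl mulr_ge0 // ltW.
have Hint2 : (\int[@lebesgue_measure R]_(t in [set: R]) (h t)%:E = Ns%:E)%E.
  by rewrite -Hint; apply: eq_integral => t _; rewrite Hout.
have th1 : 1 < theta.
  rewrite ltNge; apply/negP => th.
  move: Hint2; rewrite (eq_integral (cst 0%E)); last first.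
    move=> t _; rewrite /h ifF //; apply/negbTE; rewrite -leNgt.
    exact: le_trans (ule t) th.
  rewrite integral0 => H0; have := Ns0; by rewrite -(EFin_inj H0) ltxx.
split; last first.
  move=> th2; exists tstar; rewrite Hn.
  have ut : u tstar = theta by rewrite /u /s /sched lexx subrr mulr0 mul0r subr0.
  have th0 : 0 < theta by exact: (lt_trans ltr01 th1).
  rewrite ut th1 -subr_gt0.
  have -> : nj * (1 - theta^-1) - nj / 2 = nj * (theta - 2) / (2 * theta).
    by field; rewrite gt_eqF.
  by apply: divr_gt0; apply: mulr_gt0 => //; rewrite subr_gt0.
have th0 : 0 < theta by exact: (lt_trans ltr01 th1).
pose c1 := beta * k. pose c2 := gamma * k.
have c10 : 0 < c1 by rewrite mulr_gt0.
have c20 : 0 < c2 by rewrite mulr_gt0.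
pose d1 := (theta - 1) / c1. pose d2 := (theta - 1) / c2.
have d10 : 0 < d1 by rewrite divr_gt0 // subr_gt0.
have d20 : 0 < d2 by rewrite divr_gt0 // subr_gt0.
have cd1 : c1 * d1 = theta - 1 by rewrite /d1; field; rewrite gt_eqF.
have cd2 : c2 * d2 = theta - 1 by rewrite /d2; field; rewrite gt_eqF.
pose l := tstar - d1. pose r := tstar + d2.
pose p1 := theta - c1 * tstar. pose q1 := c1.
pose p2 := theta + c2 * tstar. pose q2 := - c2.
have uL : forall t, t <= tstar -> u t = p1 + q1 * t.
  by move=> t tt; rewrite /u /s /sched tt /p1 /q1 /c1 /=; ring.
have uR : forall t, tstar <= t -> u t = p2 + q2 * t.
  move=> t; rewrite le_eqVlt => /predU1P[<-|tt].
    by rewrite /u /s /sched lexx /p2 /q2 /=; ring.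
  by rewrite /u /s /sched leNgt tt /p2 /q2 /c2 /=; ring.
have uL1 : forall t, l <= t <= tstar -> 1 <= u t.
  move=> t /andP[lt tt]; rewrite uL // /p1 /q1.
  have : c1 * (tstar - t) <= c1 * d1 by rewrite ler_pM2l // lerBlDr -lerBlDl.
  rewrite cd1 => H; lra.
have uR1 : forall t, tstar <= t <= r -> 1 <= u t.
  move=> t /andP[tt tr]; rewrite uR // /p2 /q2.
  have : c2 * (t - tstar) <= c2 * d2 by rewrite ler_pM2l // lerBlDl.
  rewrite cd2 => H; lra.
have ltr_ : l <= tstar by rewrite /l lerBlDr lerDl ltW.
have tr_ : tstar <= r by rewrite /r lerDl ltW.
have hout : forall t, ~~ (l <= t <= r) -> h t = 0.
  move=> t; rewrite negb_and -!ltNge => /orP[tl|rt];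
    rewrite /h ifF //; apply/negbTE; rewrite -leNgt.
    have tt : t <= tstar by rewrite ltW // (lt_le_trans tl ltr_).
    rewrite uL // /p1 /q1.
    have : c1 * d1 <= c1 * (tstar - t).
      by rewrite ler_pM2l // lerBrDl -lerBrDr ltW.
    rewrite cd1 => H; lra.
  have tt : tstar <= t by rewrite ltW // (le_lt_trans tr_ rt).
  rewrite uR // /p2 /q2.
  have : c2 * d2 <= c2 * (t - tstar).
    by rewrite ler_pM2l // lerBrDr addrC ltW.
  rewrite cd2 => H; lra.
have E1 : (\int[@lebesgue_measure R]_(t in [set: R]) (h t)%:E =
           \int[@lebesgue_measure R]_(t in `[l, r]) (h t)%:E)%E.
  rewrite [RHS]integral_mkcond; apply: eq_integral => t _.
  rewrite patchE; case: ifPn => // /negP tn.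
  rewrite hout //; apply/negP => H; apply: tn; rewrite inE /= in_itv /=; exact: H.
have hg : forall t, 1 <= u t -> h t = g (u t).
  move=> t Hu; rewrite /h; case: ifPn => // H; rewrite -leNgt in H.
  have -> : u t = 1 by apply/eqP; rewrite eq_le H Hu.
  by rewrite /g subrr mul0r mulr0.
have hL : forall t, l <= t <= tstar -> h t = fp p1 q1 K t.
  move=> t Ht; rewrite hg ?uL1 // uL //; by case/andP: Ht.
have hR : forall t, tstar <= t <= r -> h t = fp p2 q2 K t.
  move=> t Ht; rewrite hg ?uR1 // uR //; by case/andP: Ht.
have mL : measurable_fun `[l, tstar] (EFin \o h).
  apply/measurable_EFinP.
  apply: (@eq_measurable_fun _ _ _ _ _ (fp p1 q1 K)).
    by move=> t; rewrite inE /= in_itv /= => Ht; rewrite hL.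
  apply: subspace_continuous_measurable_fun; first exact: measurable_itv.
  apply: derivable_within_continuous => x; rewrite in_itv /= => Hx.
  apply: derivable_f; rewrite -uL; last by case/andP: Hx.
  exact: lt_le_trans ltr01 (uL1 x Hx).
have mR : measurable_fun `]tstar, r] (EFin \o h).
  apply/measurable_EFinP.
  apply: (@eq_measurable_fun _ _ _ _ _ (fp p2 q2 K)).
    move=> t; rewrite inE /= in_itv /= => /andP[Ht1 Ht2]; rewrite hR //.
    by rewrite Ht2 ltW.
  apply: subspace_continuous_measurable_fun; first exact: measurable_itv.
  apply: derivable_within_continuous => x; rewrite in_itv /= => /andP[Hx1 Hx2].
  have Hx : tstar <= x <= r by rewrite Hx2 ltW.
  apply: derivable_f; rewrite -uR; last by case/andP: Hx.
  exact: lt_le_trans ltr01 (uR1 x Hx).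
have lt1 : l < tstar by rewrite /l ltrBlDr ltrDl.
have tr1 : tstar < r by rewrite /r ltrDl.
move: Hint2; rewrite E1.
rewrite (@itv_bndbnd_setU _ _ (BLeft l) (BRight tstar) (BRight r)); last 2 first.
  by rewrite bnd_simp.
  by rewrite bnd_simp.
rewrite integral_setU //; last 2 first.
  by apply/measurable_funU => //; exact: measurable_itv.
  rewrite disj_set2E; apply/eqP/seteqP; split => // x [] /=.
  rewrite !in_itv /= => /andP[_ x1] /andP[x2 _].
  by move: (le_lt_trans x1 x2); rewrite ltxx.
rewrite integral_itv_obnd_cbnd //.
have I1 : (\int[@lebesgue_measure R]_(x in `[l, tstar]) (h x)%:E =
    \int[@lebesgue_measure R]_(x in `[l, tstar]) (fp p1 q1 K x)%:E)%E.
  by apply: eq_integral => t; rewrite inE /= in_itv /= => Ht; rewrite hL.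
have I2 : (\int[@lebesgue_measure R]_(x in `[tstar, r]) (h x)%:E =
    \int[@lebesgue_measure R]_(x in `[tstar, r]) (fp p2 q2 K x)%:E)%E.
  by apply: eq_integral => t; rewrite inE /= in_itv /= => Ht; rewrite hR.
rewrite I1 I2.
have pos1 : forall t, l <= t <= tstar -> 0 < p1 + q1 * t.
  move=> t Ht; rewrite -uL; last by case/andP: Ht.
  exact: lt_le_trans ltr01 (uL1 t Ht).
have pos2 : forall t, tstar <= t <= r -> 0 < p2 + q2 * t.
  move=> t Ht; rewrite -uR; last by case/andP: Ht.
  exact: lt_le_trans ltr01 (uR1 t Ht).
rewrite (ftc_piece p1 q1 K _ _ lt1 _ pos1); last by rewrite gt_eqF.
rewrite (ftc_piece p2 q2 K _ _ tr1 _ pos2); last by rewrite oppr_eq0 gt_eqF.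
have e1 : p1 + q1 * tstar = theta by rewrite /p1 /q1; ring.
have e2 : p1 + q1 * l = 1.
  rewrite /p1 /q1 /l mulrBr addrA subrK; lra.
have e3 : p2 + q2 * tstar = theta by rewrite /p2 /q2; ring.
have e4 : p2 + q2 * r = 1.
  rewrite /p2 /q2 /r mulNr mulrDr opprD addrA addrK; lra.
rewrite /Fp e1 e2 e3 e4 ln1 invr1 -EFinD => HN0; have HN := EFin_inj HN0.
rewrite /Fbath -HN /q1 /q2 /c1 /c2 /k /K.
by field; rewrite !gt_eqF.
Qed.
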